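(* Let $p=2m\ge 4$ be even, let $\Delta$ be the distance squared matrix of the cycle $C_p$, and let $\lambda$ be the largest eigenvalue of $\Delta$. Let $B$ be the $p\times p$ circulant matrix with entries $B_{ij}=2\lambda$ if $d_{ij}=m$ (i.e. $j$ is antipodal to $i$ on the cycle), $B_{ij}=-\lambda$ if $d_{ij}=m-1$, and $B_{ij}=0$ otherwise; equivalently its first row is $(\mathbf 0^T,-\lambda,2\lambda,-\lambda,\mathbf 0^T)$ with zero blocks of sizes $m-1$ and $m-2$. Then $\Delta$ is invertible and \[ \Delta^{-1}=\frac{1}{4\lambda m}\left(2J+B\right), \] where $J$ is the $p\times p$ all-ones matrix.
   Context: For a connected graph with vertices $1,\dots,n$, the distance squared matrix is the matrix with $(i,j)$ entry $d_{ij}^2$, where $d_{ij}$ is the graph distance between $i$ and $j$. The vertices of $C_p$ are labeled $1,\dots,p$ in cyclic order. *)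

(* Defs.v *)
From mathcomp Require Import all_boot all_order all_algebra.
Set Implicit Arguments. Unset Strict Implicit. Unset Printing Implicit Defensive.
Import Order.TTheory GRing.Theory Num.Theory.
Local Open Scope ring_scope.

(* Graph distance in the cycle C_p, vertices labelled 0..p-1 in cyclic order
   (the paper's vertex k+1 is our index k). *)
Definition cycle_dist (p : nat) (i j : 'I_p) : nat :=
  minn `|i - j|%N (p - `|i - j|%N).

Definition cycle_dist_sq_mx (R : nzRingType) (p : nat) : 'M[R]_p :=
  \matrix_(i, j) ((cycle_dist i j) ^ 2)%N%:R.

Definition largest_eigenvalue (F : numFieldType) (n : nat) (A : 'M[F]_n) (l : F) :=
  eigenvalue A l /\ forall mu, eigenvalue A mu -> mu <= l.

Definition B_mx (R : nzRingType) (m : nat) (l : R) : 'M[R]_(m.*2) :=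
  \matrix_(i, j)
    (if cycle_dist i j == m then 2 * l
     else if cycle_dist i j == m.-1 then - l else 0).

(* Main.v *)
Require Import Defs.
From mathcomp Require Import all_boot all_order all_algebra.
From mathcomp Require Import zify ring lra.
Import Order.TTheory GRing.Theory Num.Theory.
Local Open Scope ring_scope.


Definition cd (p x : nat) : nat := minn (x %% p) (p - x %% p).

Lemma cd_eqmod p x y : x = y %[mod p] -> cd p x = cd p y.
Proof. by rewrite /cd => ->. Qed.

Lemma cycle_distE p (i j : 'I_p) : cycle_dist i j = cd p (i + (p - j)).
Proof.
have hi := ltn_ord i; have hj := ltn_ord j.
rewrite /cycle_dist /cd.
case: (leqP j i) => h.
  rewrite distnEl //.
  have -> : (i + (p - j) = (i - j) + p)%N by lia.
  rewrite modnDr modn_small; lia.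
rewrite distnEr; last lia.
rewrite modn_small; lia.
Qed.

Lemma sum_rot (R : nmodType) (p a : nat) (F : nat -> R) : (0 < p)%N ->
  \sum_(k < p) F ((a + k) %% p)%N = \sum_(k < p) F k.
Proof.
move=> p0.
have h : forall k : 'I_p, ((a + k) %% p < p)%N by move=> k; rewrite ltn_pmod.
pose g := fun k : 'I_p => Ordinal (h k).
have ginj : injective g.
  move=> k1 k2 /(congr1 val) /= /eqP; rewrite eqn_modDl !modn_small // => /eqP.
  exact: val_inj.
by apply: esym; rewrite (reindex_inj ginj).
Qed.

Section NatPart.
Local Open Scope nat_scope.

Lemma modn_2p x p : x < p.*2 -> x %% p = if x < p then x else x - p.
Proof.
move=> h; case: ifP => h2; first by rewrite modn_small.
have -> : x = ((x - p) + p)%N by lia.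
rewrite modnDr modn_small; lia.
Qed.

Lemma cd2 p x : x < p.*2 -> cd p x = if x < p then minn x (p - x) else minn (x - p) (p - (x - p)).
Proof. by move=> h; rewrite /cd modn_2p //; case: ifP. Qed.

Lemma fin_nat m r : 2 <= m -> r < m.*2 ->
  2 * cd m.*2 (r+m) ^2 + 2 = cd m.*2 (r+m.+1)^2 + cd m.*2 (r + m.-1)^2 + (r==0) * (4 * m).
Proof.
move=> hm hr.
have [->|r0] := eqVneq r 0.
  have -> : cd m.*2 (0 + m) = m by rewrite cd2; [case: ifP => ?; lia | lia].
  have -> : cd m.*2 (0 + m.+1) = m.-1 by rewrite cd2; [case: ifP => ?; lia | lia].
  have -> : cd m.*2 (0 + m.-1) = m.-1 by rewrite cd2; [case: ifP => ?; lia | lia].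
  rewrite /=; nia.
rewrite mul0n addn0.
case: (ltngtP r m) => h.
- have -> : cd m.*2 (r + m) = m - r by rewrite cd2; [case: ifP => ?; lia | lia].
  have -> : cd m.*2 (r + m.+1) = m - r - 1 by rewrite cd2; [case: ifP => ?; lia | lia].
  have -> : cd m.*2 (r + m.-1) = m - r + 1 by rewrite cd2; [case: ifP => ?; lia | lia].
  nia.
- have -> : cd m.*2 (r + m) = r - m by rewrite cd2; [case: ifP => ?; lia | lia].
  have -> : cd m.*2 (r + m.+1) = r - m + 1 by rewrite cd2; [case: ifP => ?; lia | lia].
  have -> : cd m.*2 (r + m.-1) = r - m - 1 by rewrite cd2; [case: ifP => ?; lia | lia].
  nia.
- subst r.
  have -> : cd m.*2 (m + m) = 0 by rewrite cd2; [case: ifP => ?; lia | lia].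
  have -> : cd m.*2 (m + m.+1) = 1 by rewrite cd2; [case: ifP => ?; lia | lia].
  have -> : cd m.*2 (m + m.-1) = 1 by rewrite cd2; [case: ifP => ?; lia | lia].
  by [].
Qed.

End NatPart.


Section Main.
Variables (R : rcfType) (m : nat).
Hypothesis hm : (2 <= m)%N.
Local Notation p := m.*2.
Local Notation D := (cycle_dist_sq_mx R m.*2).

Lemma p0 : (0 < p)%N. Proof. lia. Qed.

Lemma DE i j : D i j = ((cd p (i + (p - j))) ^ 2)%N%:R.
Proof. by rewrite mxE cycle_distE. Qed.

Definition S : R := \sum_(k < p) ((cd p k) ^ 2)%N%:R.

Lemma colsum (j : 'I_p) : \sum_(k < p) D k j = S.
Proof.
have cdm x : cd p x = cd p (x %% p)%N by apply: cd_eqmod; rewrite modn_mod.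
under eq_bigr => k _ do rewrite DE (addnC k) cdm.
exact: (sum_rot _ p (p - j) (fun n => ((cd p n) ^ 2)%N%:R) p0).
Qed.

Lemma S_eig : eigenvalue D S.
Proof.
apply/eigenvalueP; exists (const_mx 1).
  apply/matrixP => i j; rewrite !mxE -(colsum j) mulr1.
  by apply: eq_bigr => k _; rewrite mxE mul1r.
apply/eqP => /matrixP /(_ 0 (Ordinal p0)); rewrite !mxE => /eqP; by rewrite oner_eq0.
Qed.

Lemma gersh mu : eigenvalue D mu -> mu <= S.
Proof.
move/eigenvalueP => [v hv vn0].
have [i0 hi0] : exists i0, v 0 i0 != 0.
  apply/existsP; apply: contraR vn0; rewrite negb_exists => /forallP h.
  apply/eqP/matrixP => a b; rewrite mxE (ord1 a); exact/eqP/negPn/h.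
have [i _ imax] := @arg_maxP _ _ _ i0 xpredT (fun k => `|v 0 k|) isT.
have vi0 : 0 < `|v 0 i| by apply: lt_le_trans (imax i0 isT); rewrite normr_gt0.
have e : mu * v 0 i = \sum_k v 0 k * D k i.
  by move/matrixP: hv => /(_ 0 i); rewrite !mxE => <-.
have Dge0 k : 0 <= D k i by rewrite mxE ler0n.
have : `|mu| * `|v 0 i| <= S * `|v 0 i|.
  rewrite -normrM e -(colsum i) mulr_suml.
  apply: le_trans (ler_norm_sum _ _ _) _.
  apply: ler_sum => k _; rewrite normrM (ger0_norm (Dge0 k)) mulrC.
  by apply: ler_wpM2l => //; apply: imax.
rewrite ler_pM2r // => h; apply: le_trans h; exact: ler_norm.
Qed.


Definition c (d : nat) : R := if d == m then 2 else if d == m.-1 then -1 else 0.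
Definition C : 'M[R]_p := \matrix_(i,j) c (cycle_dist i j).

Lemma cE (k : 'I_p) : c (cd p k) =
  2 * (k == m :> nat)%:R - (k == m.-1 :> nat)%:R - (k == m.+1 :> nat)%:R.
Proof.
have hk := ltn_ord k.
have e : cd p k = minn k (p - k) by rewrite /cd modn_small.
rewrite /c e; repeat (case: eqP => ?); try lia; rewrite /=; lra.
Qed.

Lemma cong1 (j k : 'I_p) : cd p (((j + k) %% p)%N + (p - j)) = cd p k.
Proof.
apply: cd_eqmod; rewrite modnDml.
have -> : (j + k + (p - j) = k + p)%N by have := ltn_ord j; lia.
by rewrite modnDr.
Qed.

Lemma cong2 (i j k : 'I_p) : cd p (i + (p - (j + k) %% p)) = cd p (i + (p - j) + (p - k)).
Proof.
apply: cd_eqmod; apply/eqP; rewrite -(eqn_modDr ((j + k) %% p)).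
have hq : ((j + k) %% p < p)%N by rewrite ltn_pmod // p0.
have -> : (i + (p - (j + k) %% p) + (j + k) %% p = i + p)%N by lia.
rewrite modnDmr.
have -> : (i + (p - j) + (p - k) + (j + k) = (i + p) + p)%N.
  by have := ltn_ord j; have := ltn_ord k; lia.
by rewrite !modnDr.
Qed.

Lemma sum_delta (G : nat -> R) a : (a < p)%N ->
  \sum_(k < p) G k * (k == a :> nat)%:R = G a.
Proof.
move=> ha; rewrite (bigD1 (Ordinal ha)) //= eqxx mulr1 big1 ?addr0 // => k hk.
suff /negbTE -> : (k != a :> nat) by rewrite mulr0.
by apply: contra hk => /eqP h; apply/eqP/val_inj.
Qed.

Lemma DC i j : (D *m C) i j = if i == j then 4 * m%:R - 2 else -2.
Proof.
rewrite mxE.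
under eq_bigr => k _ do rewrite DE mxE cycle_distE.
rewrite -(sum_rot _ p j (fun n => (cd p (i + (p - n)) ^ 2)%N%:R * c (cd p (n + (p - j)))) p0) /=.
under eq_bigr => k _ do rewrite cong1 cong2 cE.
under eq_bigr => k _ do rewrite mulrBr mulrBr mulrCA.
rewrite !sumrB -mulr_sumr.
have sd := fun a ha => sum_delta (fun n : nat => (cd p (i + (p - j) + (p - n)) ^ 2)%N%:R) a ha.
rewrite !sd; try lia.
have -> : (p - m = m)%N by lia.
have -> : (p - m.-1 = m.+1)%N by lia.
have -> : (p - m.+1 = m.-1)%N by lia.
set r := ((i + (p - j)) %% p)%N.
have hr x : cd p (i + (p - j) + x) = cd p (r + x) by apply: cd_eqmod; rewrite modnDml.
rewrite !hr.
have hf := fin_nat _ _ hm (ltn_pmod (i + (p - j)) p0).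
have := congr1 (fun x => x%:R : R) hf; rewrite /= !natrD !natrM -/r => hf'.
have ri : (r == 0)%N = (i == j).
  have := ltn_ord i; have := ltn_ord j => hi hj.
  rewrite /r (modn_2p _ p); last lia.
  apply/idP/idP => [h|/eqP ->]; last by case: ifP => /= h; lia.
  apply/eqP/val_inj => /=; move: h; case: ifP => /= h; lia.
move: hf'; rewrite ri; case: (i == j) => /= hf'; lra.
Qed.


Lemma BE l : B_mx m l = l *: C.
Proof.
apply/matrixP => i j; rewrite !mxE /c.
by case: eqP => _; [|case: eqP => _]; rewrite ?mulr0 ?mulrN1 // mulrC.
Qed.

Lemma Dsym i j : D i j = D j i.
Proof. by rewrite !mxE /cycle_dist distnC. Qed.

Lemma DJ : D *m (const_mx 1 : 'M[R]_p) = S *: const_mx 1.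
Proof.
apply/matrixP => i j; rewrite !mxE mulr1 -(colsum i).
by apply: eq_bigr => k _; rewrite [const_mx _ _ _]mxE mulr1 Dsym.
Qed.

Lemma DCm : D *m C = (4 * m%:R) *: 1%:M - 2 *: (const_mx 1 : 'M[R]_p).
Proof.
apply/matrixP => i j; rewrite DC !mxE.
by case: eqP => _ /=; rewrite ?mulr1 ?mulr0 ?sub0r.
Qed.

Lemma S_gt0 : 0 < S.
Proof.
have h1 : (1 < p)%N by lia.
rewrite /S (bigD1 (Ordinal h1)) //=.
have -> : cd p 1 = 1%N by rewrite /cd modn_small //; lia.
apply: (@lt_le_trans _ _ (1%N%:R)); first by rewrite ltr01.
rewrite lerDl; apply: sumr_ge0 => k _; exact: ler0n.
Qed.

End Main.

Theorem lemma6p1 (R : rcfType) (m : nat) (hm : (2 <= m)%N) (l : R) :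
  largest_eigenvalue (cycle_dist_sq_mx R m.*2) l ->
  cycle_dist_sq_mx R m.*2 \in unitmx /\
  invmx (cycle_dist_sq_mx R m.*2) =
    (4 * l * m%:R)^-1 *: (2 *: const_mx 1 + B_mx m l).
Proof.
move=> [leig lmax].
have lS : l = S R m.
  by apply/eqP; rewrite eq_le (@gersh R m hm l leig) lmax // S_eig.
have Sg := @S_gt0 R m hm.
have m0 : (0 : R) < m%:R by rewrite ltr0n; lia.
have key : cycle_dist_sq_mx R m.*2 *m
    ((4 * l * m%:R)^-1 *: (2 *: const_mx 1 + B_mx m l)) = 1%:M.
  rewrite BE -scalemxAr mulmxDr -!scalemxAr (@DJ R m hm) (@DCm R m hm) -lS.
  apply/matrixP => i j; rewrite !mxE.
  have l0 : l != 0 by rewrite lS gt_eqF.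
  have mm0 : (m%:R : R) != 0 by rewrite gt_eqF.
  have n4 : (4 * l * m%:R) != 0.
    by rewrite !mulf_neq0 // pnatr_eq0.
  case: (i == j) => /=; rewrite ?mulr1 ?mulr0.
    have -> : 2 * l + l * (4 * m%:R - 2) = 4 * l * m%:R by ring.
    by rewrite mulVf.
  have -> : 2 * l + l * (0 - 2) = 0 by ring.
  by rewrite mulr0.
have [u _] := mulmx1_unit key.
split => //.
by rewrite -[LHS]mulmx1 -key mulmxA mulVmx // mul1mx.
Qed.
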